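(* Let $(X,\mathcal S,\mu)$ be a finite positive (not necessarily complete) measure space, let $0\le k\le d$ be integers, and let $X\ni x\mapsto V_x\in\mathrm{Gr}_k(\mathbb R^d)$ be a map. The following are equivalent: 1) there is $X_1\in\mathcal S$ with $\mu(X\setminus X_1)=0$ such that $X_1\ni x\mapsto V_x$ is measurable, $\mathrm{Gr}_k(\mathbb R^d)$ being endowed with its Borel $\sigma$-algebra; 2) there is $X_2\in\mathcal S$ with $\mu(X\setminus X_2)=0$ and measurable maps $v_1,\dots,v_k:X_2\to\mathbb R^d$ such that for all $x\in X_2$, $\{v_1(x),\dots,v_k(x)\}$ is an orthonormal basis of $V_x$; 3) there is $X_3\in\mathcal S$ with $\mu(X\setminus X_3)=0$ and a bi-measurable bijection $\Lambda$ from $\{(x,v):x\in X_3,v\in V_x\}$ onto $X_3\times\mathbb R^k$ which covers the identity of $X$ and is a linear isometry on each fiber, i.e. for each $x\in X_3$, $\Lambda(x,\cdot)$ is a linear isometry from $V_x$ onto $\{x\}\times\mathbb R^k$.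
   Context: $\mathrm{Gr}_k(\mathbb R^d)$ is the Grassmannian of $k$-dimensional linear subspaces of $\mathbb R^d$; $\mathbb R^d$ carries its Euclidean inner product and Borel $\sigma$-algebra. The sets $\{(x,v):x\in X_3,v\in V_x\}\subset X\times\mathbb R^d$ and $X_3\times\mathbb R^k$ carry the traces of the product $\sigma$-algebras $\mathcal S\otimes\mathcal B(\mathbb R^d)$ and $\mathcal S\otimes\mathcal B(\mathbb R^k)$; a bijection is bi-measurable if it and its inverse are measurable. *)

(* Defs.v *)
From HB Require Import structures.
From mathcomp Require Import all_boot all_order all_algebra.
From mathcomp Require Import all_classical all_reals all_analysis.
Set Implicit Arguments. Unset Strict Implicit. Unset Printing Implicit Defensive.
Import Order.TTheory GRing.Theory Num.Theory.
Import numFieldNormedType.Exports.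
Local Open Scope classical_set_scope.
Local Open Scope ring_scope.

Section Defs.
Variable R : realType.

Definition dotv (d : nat) (u v : 'rV[R]_d) : R := \sum_(i < d) u 0 i * v 0 i.
Definition enorm (d : nat) (v : 'rV[R]_d) : R := Num.sqrt (dotv v v).

(* Borel sigma-algebra on R^d: generated by the open sets (of the standard
   topology of 'rV[R]_d, which is the Euclidean topology). *)
Definition Borel (d : nat) : set (set 'rV[R]_d) := <<s [set O | open O] >>.

Definition Grass (k d : nat) : set (set 'rV[R]_d) :=
  [set V | exists A : 'M[R]_(k, d), \rank A = k /\ V = [set v | (v <= A)%MS]].

Definition orthproj (d : nat) (P : 'M[R]_d) (V : set 'rV[R]_d) : Prop :=
  P^T = P /\ P *m P = P /\ V = [set v | v *m P = v].

(* Open sets of Gr_k(R^d): the standard topology, i.e. the one transported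
   from the space of matrices through V |-> orthogonal projection onto V. *)
Definition GrOpen (k d : nat) : set (set (set 'rV[R]_d)) :=
  [set U | exists O : set 'M[R]_d, open O /\
     U = [set V | @Grass k d V /\ exists P, orthproj P V /\ O P]].

Definition GrBorel (k d : nat) : set (set (set 'rV[R]_d)) :=
  <<s @Grass k d, @GrOpen k d >>.

Definition prod_sigma (d0 : measure_display) (X : measurableType d0) (n : nat)
  : set (set (X * 'rV[R]_n)) :=
  <<s [set C | exists A B, measurable A /\ @Borel n B /\ C = A `*` B] >>.

End Defs.

Arguments Borel R d : clear implicits.
Arguments Grass R k d : clear implicits.
Arguments GrOpen R k d : clear implicits.
Arguments GrBorel R k d : clear implicits.
Arguments prod_sigma R d0 X n : clear implicits.

Definition trace_sigma (T : Type) (D : set T) (M : set (set T)) : set (set T) :=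
  [set D `&` C | C in M].

Definition meas_between (T1 T2 : Type) (D1 : set T1) (M1 : set (set T1))
  (M2 : set (set T2)) (f : T1 -> T2) : Prop :=
  forall B, M2 B -> M1 (D1 `&` f @^-1` B).

(* Main.v *)
Require Import Defs.
From HB Require Import structures.
From mathcomp Require Import all_boot all_order all_algebra.
From mathcomp Require Import all_classical all_reals all_analysis.
Import Order.TTheory GRing.Theory Num.Theory.
Import numFieldNormedType.Exports.
Local Open Scope classical_set_scope.
Local Open Scope ring_scope.
From mathcomp Require Import lra measurable_realfun.
Set Implicit Arguments. Unset Strict Implicit. Unset Printing Implicit Defensive.
Section MxBorel.
Variable R : realType.

Definition mxopen (m n : nat) : set (set 'M[R]_(m,n)) := [set O | open O].
Arguments mxopen : clear implicits.
Definition MB (m n : nat) := g_sigma_algebraType (mxopen m n).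
Arguments MB : clear implicits.

Lemma mx_ballE m n (M N : 'M[R]_(m,n)) e : ball M e N <-> (0 < e /\ forall i j, ball (M i j) e (N i j)).
Proof. by []. Qed.

Lemma entry_cont m n i j : continuous (fun M : 'M[R]_(m,n) => M i j).
Proof.
move=> M B /= /nbhs_ballP[e e0 eB]; apply/nbhs_ballP; exists e => // N /mx_ballE[_ h].
exact: eB.
Qed.

Definition Bx m n (qr : 'M[rat]_(m,n) * rat) : set 'M[R]_(m,n) :=
  [set N | forall i j, `|N i j - ratr (qr.1 i j)| < ratr qr.2].
Arguments Bx {m n}.

Lemma open_Bx_cover m n (O : set 'M[R]_(m,n)) : open O ->
  O = \bigcup_(qr in [set qr | Bx qr `<=` O]) Bx qr.
Proof.
move=> oO; apply/seteqP; split; last by move=> N [qr /= sub]; apply: sub.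
move=> M OM.
have /nbhs_ballP[e e0 eO] : nbhs M O by exact: open_nbhs_nbhs.
have e20 : 0 < e / 2 by rewrite divr_gt0.
have [r /[!in_itv] /= /andP[r0 re]] := rat_in_itvoo e20.
have hq : forall ij : 'I_m * 'I_n, exists q : rat,
    ratr q \in `](M ij.1 ij.2 - ratr r), (M ij.1 ij.2 + ratr r)[.
  move=> ij; apply: rat_in_itvoo.
  by rewrite ltrBlDr -addrA ltrDl addr_gt0.
have [Q HQ] := choice hq.
pose Qm := \matrix_(i, j) Q (i, j).
exists (Qm, r).
  move=> N /= HN; apply: eO; split => // i j.
  rewrite /ball /= (le_lt_trans (ler_distD (ratr (Qm i j)) _ _)) //.
  have := HQ (i, j); rewrite in_itv /= => /andP[h1 h2].
  rewrite (splitr e) ltrD //.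
    rewrite mxE ltr_distl; apply/andP; split; lra.
  have := HN i j; rewrite distrC !ltr_distl => /andP[? ?]; apply/andP; split; lra.
move=> i j /=; rewrite mxE; have := HQ (i, j); rewrite in_itv /= => /andP[h1 h2].
rewrite ltr_distl; apply/andP; split; lra.
Qed.

Lemma mx_meas_coord d0 (T : measurableType d0) m n (D : set T) (f : T -> 'M[R]_(m,n)) :
  (forall i j, measurable_fun D (fun x => f x i j)) -> measurable_fun D (f : T -> MB m n).
Proof.
move=> mf mD.
suff H : preimage_set_system D f (mxopen m n) `<=` measurable.
  exact: (@measurability _ _ T (MB m n) D f (mxopen m n) erefl H mD).
move=> _ [U oU <-].
rewrite (open_Bx_cover oU) preimage_bigcup setI_bigcupr.
have -> : \bigcup_(i in [set qr | Bx qr `<=` U]) (D `&` f @^-1` Bx i) =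
  \bigcup_i (if `[< Bx i `<=` U >] then D `&` f @^-1` Bx i else set0).
  apply/seteqP; split => x.
    by move=> [qr sub h]; exists qr => //; rewrite asboolT.
  move=> [qr _]; case: asboolP => // sub h; by exists qr.
apply: countable_bigcupT_measurable; first exact: countableP.
move=> qr; case: asboolP => _ //.
have -> : D `&` f @^-1` Bx qr = D `&` \big[setI/setT]_(ij <- enum [set: 'I_m * 'I_n])
      (D `&` [set x | `|f x ij.1 ij.2 - ratr (qr.1 ij.1 ij.2)| < ratr qr.2]).
  rewrite -bigcap_seq; apply/seteqP; split => x.
    move=> [Dx h]; split => // ij _; split => //; exact: h.
  move=> [Dx h]; split => // i j.
  have Hin : (i, j) \in enum [set: 'I_m * 'I_n] by rewrite mem_enum inE.
  by have [] := h (i, j) Hin.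
apply: measurableI => //; apply: bigsetI_measurable => ij _.
rewrite [X in measurable X](_ : _ = D `&` (fun x => f x ij.1 ij.2) @^-1`
   `](ratr (qr.1 ij.1 ij.2) - ratr qr.2), (ratr (qr.1 ij.1 ij.2) + ratr qr.2)[).
  by apply: (mf ij.1 ij.2 mD); exact: measurable_itv.
apply/seteqP; split => x [Dx h]; split => //=.
  by rewrite in_itv /=; move: h => /=; rewrite ltr_distl => H; exact: H.
by move: h; rewrite /= in_itv /= ltr_distl => H; exact: H.
Qed.

Lemma entry_meas m n i j : measurable_fun [set: MB m n] (fun M : 'M[R]_(m,n) => M i j).
Proof.
apply: (measurability _ (RGenOpens.measurableE R)) => _ [_ [a [b ->]] <-].
rewrite setTI; apply: sub_sigma_algebra; rewrite /mxopen /=.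
apply: (proj1 (continuousP _) (@entry_cont m n i j)); exact: interval_open.
Qed.

Lemma mx_coord_meas d0 (T : measurableType d0) m n (D : set T) (f : T -> 'M[R]_(m,n)) :
  measurable_fun D (f : T -> MB m n) -> forall i j, measurable_fun D (fun x => f x i j).
Proof. by move=> mf i j; exact: (measurableT_comp (entry_meas i j) mf). Qed.

Lemma meas_inv : measurable_fun [set: R] (fun x : R => x^-1).
Proof.
move=> _ B mB; rewrite setTI.
have mD : measurable [set x : R | x != 0] by apply: open_measurable; exact: open_neq.
have -> : (fun x : R => x^-1) @^-1` B =
   ([set x : R | x != 0] `&` (fun x : R => x^-1) @^-1` B) `|` ([set 0] `&` (fun x : R => x^-1) @^-1` B).
  apply/seteqP; split; last by move=> y [[]|[]].
  move=> y By; have [y0|y0] := eqVneq y 0; [apply: or_intror|apply: or_introl]; by split.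
apply: measurableU.
  have hc : {in [set x : R | x != 0], continuous (fun x : R => x^-1)}.
    by move=> x; rewrite inE => x0; exact: inv_continuous.
  exact: (open_continuous_measurable_fun (@open_neq R 0) hc mD mB).
have [B0|B0] := pselect (B 0).
  have -> : [set 0] `&` (fun x : R => x^-1) @^-1` B = [set 0].
    apply/seteqP; split => x; first by move=> [].
    by move=> /= ->; split => //=; rewrite invr0.
  exact: measurable_set1.
have -> : [set 0] `&` (fun x : R => x^-1) @^-1` B = set0.
  by apply/seteqP; split => x // [/= -> ]; rewrite invr0.
exact: measurable0.
Qed.

Lemma meas_sqrt : measurable_fun [set: R] (@Num.sqrt R).
Proof. exact: (continuous_measurable_fun (@sqrt_continuous R)). Qed.

End MxBorel.

Section Lin.
Variable R : realType.
Implicit Types (d k : nat).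

Lemma dotvE d (u v : 'rV[R]_d) : dotv u v = (u *m v^T) 0 0.
Proof. by rewrite /dotv mxE; apply: eq_bigr => i _; rewrite mxE. Qed.

Lemma dotvC d (u v : 'rV[R]_d) : dotv u v = dotv v u.
Proof. by rewrite /dotv; apply: eq_bigr => i _; rewrite mulrC. Qed.

Lemma dotvDl d (u v w : 'rV[R]_d) : dotv (u + v) w = dotv u w + dotv v w.
Proof. by rewrite /dotv -big_split; apply: eq_bigr => i _; rewrite mxE mulrDl. Qed.

Lemma dotvZl d a (u w : 'rV[R]_d) : dotv (a *: u) w = a * dotv u w.
Proof. by rewrite /dotv mulr_sumr; apply: eq_bigr => i _; rewrite mxE mulrA. Qed.

Lemma dotvDr d (u v w : 'rV[R]_d) : dotv w (u + v) = dotv w u + dotv w v.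
Proof. by rewrite dotvC dotvDl !(dotvC w). Qed.

Lemma dotvZr d a (u w : 'rV[R]_d) : dotv w (a *: u) = a * dotv w u.
Proof. by rewrite dotvC dotvZl dotvC. Qed.

Lemma dotv0l d (u : 'rV[R]_d) : dotv 0 u = 0.
Proof. by rewrite /dotv big1 // => i _; rewrite mxE mul0r. Qed.

Lemma dotv0r d (u : 'rV[R]_d) : dotv u 0 = 0.
Proof. by rewrite dotvC dotv0l. Qed.

Lemma dotvNl d (u w : 'rV[R]_d) : dotv (- u) w = - dotv u w.
Proof. by rewrite -scaleN1r dotvZl mulN1r. Qed.

Lemma dotvBl d (u v w : 'rV[R]_d) : dotv (u - v) w = dotv u w - dotv v w.
Proof. by rewrite dotvDl dotvNl. Qed.

Lemma dotv_suml d I (r : seq I) (P : pred I) (F : I -> 'rV[R]_d) w :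
  dotv (\sum_(i <- r | P i) F i) w = \sum_(i <- r | P i) dotv (F i) w.
Proof.
elim/big_rec2: _ => [|i a b _ <-]; first exact: dotv0l.
by rewrite dotvDl.
Qed.

Lemma dotv_ge0 d (u : 'rV[R]_d) : 0 <= dotv u u.
Proof. by rewrite /dotv sumr_ge0 // => i _; rewrite -expr2 sqr_ge0. Qed.

Lemma dotv_eq0 d (u : 'rV[R]_d) : dotv u u = 0 -> u = 0.
Proof.
move=> /eqP; rewrite /dotv psumr_eq0 => [/allP h|i _]; last by rewrite -expr2 sqr_ge0.
apply/rowP => i; rewrite mxE; have := h i (mem_index_enum i).
by rewrite implyTb -expr2 sqrf_eq0 => /eqP.
Qed.

Lemma enorm_sq d (u : 'rV[R]_d) : enorm u ^+ 2 = dotv u u.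
Proof. by rewrite /enorm sqr_sqrtr // dotv_ge0. Qed.

Lemma enorm_eq_dot d d' (u : 'rV[R]_d) (v : 'rV[R]_d') : enorm u = enorm v -> dotv u u = dotv v v.
Proof. by move=> h; rewrite -!enorm_sq h. Qed.

Definition smx d (s : seq 'rV[R]_d) : 'M[R]_(size s, d) := \matrix_(i < size s) s`_i.

Lemma mem_smx d (s : seq 'rV[R]_d) e : e \in s -> (e <= smx s)%MS.
Proof.
move=> es; have hi : (index e s < size s)%N by rewrite index_mem.
have -> : e = row (Ordinal hi) (smx s) by rewrite rowK /= nth_index.
exact: row_sub.
Qed.

Lemma sub_smx d (s : seq 'rV[R]_d) m (B : 'M[R]_(m, d)) :
  (forall e, e \in s -> (e <= B)%MS) -> (smx s <= B)%MS.
Proof. by move=> h; apply/row_subP => i; rewrite rowK; apply/h/mem_nth. Qed.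

Lemma setsub_eqmx d m1 m2 (A : 'M[R]_(m1, d)) (B : 'M[R]_(m2, d)) :
  [set u : 'rV[R]_d | (u <= A)%MS] = [set u | (u <= B)%MS] -> (A == B)%MS.
Proof.
move=> h; apply/andP; split; apply/row_subP => i.
  have : [set u : 'rV[R]_d | (u <= A)%MS] (row i A) by exact: row_sub.
  by rewrite h.
have : [set u : 'rV[R]_d | (u <= B)%MS] (row i B) by exact: row_sub.
by rewrite -h.
Qed.

Lemma eqmx_setsub d m1 m2 (A : 'M[R]_(m1, d)) (B : 'M[R]_(m2, d)) :
  (A == B)%MS -> [set u : 'rV[R]_d | (u <= A)%MS] = [set u | (u <= B)%MS].
Proof.
move=> /eqmxP h; apply/seteqP; split => u /=; by rewrite h.
Qed.

Lemma ON_rank d n (M : 'M[R]_(n, d)) : M *m M^T = 1%:M -> \rank M = n.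
Proof.
move=> h; apply/eqP; rewrite eqn_leq rank_leq_row /=.
by rewrite -{1}(mxrank1 R n) -h mxrankM_maxl.
Qed.

Lemma ON_mxE d n (M : 'M[R]_(n, d)) :
  (forall i j, dotv (row i M) (row j M) = (i == j)%:R) -> M *m M^T = 1%:M.
Proof.
move=> h; apply/matrixP => i j.
rewrite [RHS]mxE -[_ *+ _]/((i == j)%:R) -h /dotv !mxE.
by apply: eq_bigr => l _; rewrite !mxE.
Qed.


Lemma orthproj_rowin d (P : 'M[R]_d) V i : orthproj P V -> V (row i P).
Proof. by move=> [_ [Pi ->]] /=; rewrite -row_mul Pi. Qed.

Lemma orthproj_uniq d (P Q : 'M[R]_d) V : orthproj P V -> orthproj Q V -> P = Q.
Proof.
move=> hP hQ.
have PQ : P *m Q = P.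
  apply/row_matrixP => i; rewrite row_mul.
  by have := orthproj_rowin i hP; case: hQ => _ [_ ->].
have QP : Q *m P = Q.
  apply/row_matrixP => i; rewrite row_mul.
  by have := orthproj_rowin i hQ; case: hP => _ [_ ->].
case: hP => Ps _; case: hQ => Qs _.
by rewrite -Ps -PQ trmx_mul Ps Qs QP.
Qed.

Lemma orthproj_span d (P : 'M[R]_d) V : orthproj P V -> V = [set u | (u <= P)%MS].
Proof.
move=> [_ [Pi ->]]; apply/seteqP; split => u /=.
  by move=> <-; exact: submxMl.
by move=> /submxP[z ->]; rewrite -mulmxA Pi.
Qed.

Lemma ON_orthproj d k (M : 'M[R]_(k, d)) : M *m M^T = 1%:M ->
  orthproj (M^T *m M) [set u | (u <= M)%MS].
Proof.
move=> h; split; first by rewrite trmx_mul trmxK.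
split; first by rewrite mulmxA -(mulmxA M^T) h mulmx1.
apply/seteqP; split => u /=.
  by move=> /submxP[z ->]; rewrite mulmxA -(mulmxA z) h mulmx1.
by move=> <-; rewrite mulmxA; exact: submxMl.
Qed.

Lemma Grass_orthproj d k V : Grass R k d V -> exists P, orthproj P V.
Proof.
move=> [A [rk ->]].
have uG : A *m A^T \in unitmx.
  rewrite -row_free_unit; apply: inj_row_free => w hw.
  have : dotv (w *m A) (w *m A) = 0.
    by rewrite dotvE trmx_mul mulmxA -(mulmxA w) hw mul0mx mxE.
  move/dotv_eq0/eqP; rewrite mulmx_free_eq0; first by move/eqP.
  by rewrite /row_free rk.
exists (A^T *m invmx (A *m A^T) *m A); split.
  by rewrite !trmx_mul trmxK trmx_inv trmx_mul trmxK mulmxA.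
split.
  by rewrite -!mulmxA (mulmxA A) (mulmxA (A *m A^T)) mulmxV // mul1mx.
apply/seteqP; split => u /=.
  by move=> /submxP[z ->]; rewrite !mulmxA -(mulmxA z A) -(mulmxA z) mulmxV // mulmx1.
by move=> <-; rewrite mulmxA; exact: submxMl.
Qed.


Definition nrm d (w : 'rV[R]_d) := (Num.sqrt (dotv w w))^-1 *: w.

Definition gsw d (s : seq 'rV[R]_d) (b : 'rV[R]_d) := b - \sum_(e <- s) dotv b e *: e.

Fixpoint gs d (a : nat -> 'rV[R]_d) (n : nat) : seq 'rV[R]_d :=
  if n is n'.+1 then rcons (gs a n') (nrm (gsw (gs a n') (a n'))) else [::].

Definition onz d (s : seq 'rV[R]_d) := forall t1 t2, (t1 < size s)%N -> (t2 < size s)%N ->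
  dotv s`_t1 s`_t2 = ((t1 == t2) && (s`_t1 != 0))%:R.

Lemma size_gs d (a : nat -> 'rV[R]_d) n : size (gs a n) = n.
Proof. by elim: n => //= n IH; rewrite size_rcons IH. Qed.

Lemma nrm_dot d (w : 'rV[R]_d) : dotv (nrm w) (nrm w) = (nrm w != 0)%:R.
Proof.
have [w0|w0] := eqVneq (dotv w w) 0.
  by rewrite /nrm w0 sqrtr0 invr0 scale0r eqxx dotv0l.
have hd : dotv (nrm w) (nrm w) = 1.
  rewrite /nrm dotvZl dotvZr mulrA -expr2 exprVn sqr_sqrtr ?dotv_ge0 //.
  by rewrite mulVf.
rewrite hd; case: eqP => // h; move: hd; rewrite h dotv0l => /eqP.
by rewrite eq_sym oner_eq0.
Qed.

Lemma nrm_inv d (w : 'rV[R]_d) : dotv w w != 0 -> w = Num.sqrt (dotv w w) *: nrm w.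
Proof.
move=> h; rewrite /nrm scalerA mulfV ?scale1r //.
by rewrite sqrtr_eq0 -ltNge lt_def h dotv_ge0.
Qed.

Lemma nrm_dotl d (w v : 'rV[R]_d) : dotv (nrm w) v = (Num.sqrt (dotv w w))^-1 * dotv w v.
Proof. by rewrite /nrm dotvZl. Qed.

Lemma gsw_orth d (s : seq 'rV[R]_d) b : onz s ->
  forall t, (t < size s)%N -> dotv (gsw s b) s`_t = 0.
Proof.
move=> hs t ht; rewrite /gsw dotvBl dotv_suml (big_nth 0) big_mkord.
rewrite (bigD1 (Ordinal ht)) //= big1 ?addr0; last first.
  move=> i /eqP hi; rewrite dotvZl (hs _ _ (ltn_ord i) ht).
  have -> : (i == t :> nat) = false by apply/negP => /eqP h; apply: hi; apply: val_inj.
  by rewrite /= mulr0.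
rewrite dotvZl hs // eqxx /=; have [->|_] := eqVneq s`_t 0.
  by rewrite dotv0r mul0r subr0.
by rewrite mulr1 subrr.
Qed.

Lemma gs_onz d (a : nat -> 'rV[R]_d) n : onz (gs a n).
Proof.
elim: n => [|n IH] /=; first by move=> t1 t2.
set s := gs a n; set y := nrm _.
have hsz : size s = n by rewrite size_gs.
have ho : forall t, (t < n)%N -> dotv y s`_t = 0.
  move=> t ht; rewrite nrm_dotl gsw_orth ?mulr0 //; by rewrite hsz.
move=> t1 t2; rewrite size_rcons hsz !nth_rcons hsz => h1 h2.
have e1 : (t1 < n)%N \/ t1 = n.
  by case: (ltnP t1 n) => g; [left|right; apply/eqP; rewrite eqn_leq g -ltnS h1].
have e2 : (t2 < n)%N \/ t2 = n.
  by case: (ltnP t2 n) => g; [left|right; apply/eqP; rewrite eqn_leq g -ltnS h2].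
case: e1 => [l1|->]; case: e2 => [l2|->]; rewrite ?ltnn ?eqxx ?l1 ?l2.
- by apply: IH; rewrite hsz.
- by rewrite dotvC ho // (ltn_eqF l1).
- by rewrite ho // eq_sym (ltn_eqF l2).
- exact: nrm_dot.
Qed.

Lemma smx_sub_rcons d (s : seq 'rV[R]_d) y : (smx s <= smx (rcons s y))%MS.
Proof. by apply: sub_smx => e he; apply: mem_smx; rewrite mem_rcons inE he orbT. Qed.

Lemma smx_sum d (s : seq 'rV[R]_d) m (B : 'M[R]_(m, d)) (c : 'rV[R]_d -> R) :
  (smx s <= B)%MS -> ((\sum_(e <- s) c e *: e)%R <= B)%MS.
Proof.
move=> h; rewrite big_seq; apply: summx_sub => e he; apply: scalemx_sub.
exact: submx_trans (mem_smx he) h.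
Qed.

Lemma gs_span d (a : nat -> 'rV[R]_d) n : (smx (gs a n) == smx (map a (iota 0 n)))%MS.
Proof.
elim: n => [|n IH]; first by apply/andP; split; apply: sub_smx.
have hA : map a (iota 0 n.+1) = rcons (map a (iota 0 n)) (a n).
  by rewrite -[n.+1]addn1 iotaD map_cat /= cats1.
rewrite hA /=.
set s := gs a n; set A := map a (iota 0 n); move: IH; rewrite -/s -/A => /andP[h1 h2].
apply/andP; split; apply: sub_smx => e; rewrite mem_rcons inE => /orP[/eqP->|he].
- apply: scalemx_sub; rewrite /gsw; apply: addmx_sub.
    by apply: mem_smx; rewrite mem_rcons inE eqxx.
  rewrite -scaleN1r; apply: scalemx_sub; apply: smx_sum.
  exact: submx_trans h1 (smx_sub_rcons _ _).
- apply: submx_trans (mem_smx he) _; apply: submx_trans h1 _; exact: smx_sub_rcons.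
- have ha : a n = gsw s (a n) + \sum_(e <- s) dotv (a n) e *: e by rewrite /gsw subrK.
  have hsub : (a n <= (gsw s (a n) + \sum_(e <- s) dotv (a n) e *: e)%R)%MS by rewrite -ha.
  apply: submx_trans hsub _.
  apply: addmx_sub; last first.
    by apply: smx_sum; exact: smx_sub_rcons.
  have [w0|w0] := eqVneq (dotv (gsw s (a n)) (gsw s (a n))) 0.
    by rewrite (dotv_eq0 w0) sub0mx.
  have hw : (gsw s (a n) <= nrm (gsw s (a n)))%MS.
    by rewrite {1}(nrm_inv w0); apply: scalemx_sub.
  apply: submx_trans hw _; apply: mem_smx.
  by rewrite mem_rcons inE eqxx.
- apply: submx_trans (mem_smx he) _; apply: submx_trans h2 _; exact: smx_sub_rcons.
Qed.


Lemma eqmxb_trans d m1 m2 m3 (A : 'M[R]_(m1, d)) (B : 'M[R]_(m2, d)) (C : 'M[R]_(m3, d)) :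
  (A == B)%MS -> (B == C)%MS -> (A == C)%MS.
Proof. by move=> /eqmxP h1 /eqmxP h2; apply/eqmxP; exact: eqmx_trans h1 h2. Qed.

Lemma eqmxb_sym d m1 m2 (A : 'M[R]_(m1, d)) (B : 'M[R]_(m2, d)) :
  (A == B)%MS -> (B == A)%MS.
Proof. by move=> /eqmxP h1; apply/eqmxP; exact: eqmx_sym. Qed.

Definition rowsP d (P : 'M[R]_d) : seq 'rV[R]_d := [seq row i P | i <- enum 'I_d].

Lemma size_rowsP d (P : 'M[R]_d) : size (rowsP P) = d.
Proof. by rewrite size_map size_enum_ord. Qed.

Lemma rowsP_eqmx d (P : 'M[R]_d) : (smx (rowsP P) == P)%MS.
Proof.
apply/andP; split.
  by apply: sub_smx => e /mapP[i _ ->]; exact: row_sub.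
apply/row_subP => i; apply: mem_smx; apply: map_f; exact: mem_enum.
Qed.

Lemma smx_seq_eq d (s1 s2 : seq 'rV[R]_d) : s1 = s2 -> (smx s1 == smx s2)%MS.
Proof. by move=> ->; apply/andP; split. Qed.

Definition gsb d (P : 'M[R]_d) : seq 'rV[R]_d :=
  [seq e <- gs (nth 0 (rowsP P)) d | e != 0].

Lemma onz_pairwise d (s : seq 'rV[R]_d) : onz s -> pairwise (fun e f => dotv e f == 0) s.
Proof.
move=> h; apply/(pairwiseP 0) => i j hi hj ij.
by rewrite h // (ltn_eqF ij).
Qed.

Lemma gsb_ON d (P : 'M[R]_d) t1 t2 : (t1 < size (gsb P))%N -> (t2 < size (gsb P))%N ->
  dotv (gsb P)`_t1 (gsb P)`_t2 = (t1 == t2)%:R.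
Proof.
have hs := @gs_onz d (nth 0 (rowsP P)) d.
have hp : pairwise (fun e f => dotv e f == 0) (gsb P) by apply/pairwise_filter/onz_pairwise.
have hunit : forall e, e \in gsb P -> dotv e e = 1.
  move=> e; rewrite mem_filter => /andP[e0 /(nthP 0)[t ht et]].
  by rewrite -et hs // eqxx /= et e0.
move=> h1 h2; have [->|ne] := eqVneq t1 t2.
  by rewrite hunit // mem_nth.
case: (ltngtP t1 t2) => [l|l|/eqP]; last by rewrite (negbTE ne).
  by apply/eqP; move/(pairwiseP 0): hp; apply.
by rewrite dotvC; apply/eqP; move/(pairwiseP 0): hp; apply.
Qed.

Lemma gsb_span d (P : 'M[R]_d) : (smx (gsb P) == P)%MS.
Proof.
apply: eqmxb_trans (rowsP_eqmx P).
have h1 := @gs_span d (nth 0 (rowsP P)) d.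
have h2 : (smx (map (nth 0 (rowsP P)) (iota 0 d)) == smx (rowsP P))%MS.
  apply: smx_seq_eq; rewrite -[X in iota 0 X](size_rowsP P); exact: mkseq_nth.
apply: eqmxb_trans (eqmxb_trans h1 h2).
apply/andP; split; apply: sub_smx => e.
  by rewrite mem_filter => /andP[_ he]; exact: mem_smx.
have [-> _|e0 he] := eqVneq e 0; first exact: sub0mx.
by apply: mem_smx; rewrite mem_filter e0.
Qed.

Lemma gsb_main d k V (P : 'M[R]_d) : Grass R k d V -> orthproj P V ->
  size (gsb P) = k /\
  (forall i j : 'I_k, dotv (gsb P)`_i (gsb P)`_j = (i == j)%:R) /\
  V = [set u | (u <= \matrix_(i < k, j < d) ((gsb P)`_i) 0 j)%MS].
Proof.
move=> [A [rk hVA]] hP.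
have hspan := gsb_span P.
have hVw : V = [set u | (u <= smx (gsb P))%MS].
  rewrite (orthproj_span hP); apply: eqmx_setsub; exact: eqmxb_sym.
have hsz : size (gsb P) = k.
  have hON : smx (gsb P) *m (smx (gsb P))^T = 1%:M.
    by apply: ON_mxE => i j; rewrite !rowK gsb_ON.
  rewrite -(ON_rank hON) -rk; apply: eqmx_rank; apply: setsub_eqmx.
  by rewrite -hVw -hVA.
split => //; split.
  by move=> i j; rewrite gsb_ON ?hsz.
rewrite hVw; apply: eqmx_setsub; apply/andP; split.
  apply: sub_smx => e he.
  have hi : (index e (gsb P) < k)%N by rewrite -hsz index_mem.
  have -> : e = row (Ordinal hi) (\matrix_(i < k, j < d) ((gsb P)`_i) 0 j).
    by apply/rowP => j; rewrite !mxE /= nth_index.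
  exact: row_sub.
apply/row_subP => i.
have -> : row i (\matrix_(i < k, j < d) ((gsb P)`_i) 0 j) = (gsb P)`_i.
  by apply/rowP => j; rewrite !mxE.
by apply: mem_smx; apply: mem_nth; rewrite hsz.
Qed.


Lemma ON_back d k (M : 'M[R]_(k, d)) (u : 'rV[R]_d) : M *m M^T = 1%:M -> (u <= M)%MS -> u *m M^T *m M = u.
Proof. by move=> h /submxP[z ->]; rewrite -(mulmxA z) h mulmx1. Qed.

Lemma ON_fwd d k (M : 'M[R]_(k, d)) (y : 'rV[R]_k) : M *m M^T = 1%:M -> y *m M *m M^T = y.
Proof. by move=> h; rewrite -mulmxA h mulmx1. Qed.

Lemma ON_dot d k (M : 'M[R]_(k, d)) (u : 'rV[R]_d) : M *m M^T = 1%:M -> (u <= M)%MS ->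
  dotv (u *m M^T) (u *m M^T) = dotv u u.
Proof.
move=> h /submxP[z ->]; rewrite -(mulmxA z) h mulmx1 !dotvE.
by rewrite trmx_mul mulmxA -(mulmxA z) h mulmx1.
Qed.

Lemma ON_vec d k (v : 'I_k -> 'rV[R]_d) :
  (forall i j, dotv (v i) (v j) = (i == j)%:R) ->
  let M := \matrix_(i < k, j < d) v i 0 j in M *m M^T = 1%:M.
Proof.
move=> h M; apply: ON_mxE => i j.
have hr : forall i, row i M = v i by move=> i'; apply/rowP => l; rewrite !mxE.
by rewrite !hr h.
Qed.

Lemma dot_delta k (i j : 'I_k) : dotv (delta_mx 0 i : 'rV[R]_k) (delta_mx 0 j) = (i == j)%:R.
Proof.
rewrite /dotv (bigD1 i) //= big1 ?addr0; last first.
  by move=> l li; rewrite !mxE (negbTE li) andbF mul0r.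
by rewrite !mxE !eqxx /= mul1r eq_sym.
Qed.

Lemma iso_basis d k m (A : 'M[R]_(m, d)) (W : set 'rV[R]_d)
    (phi : 'rV[R]_d -> 'rV[R]_k) (psi : 'rV[R]_k -> 'rV[R]_d) :
  W = [set u | (u <= A)%MS] ->
  (forall a u w, W u -> W w -> phi (a *: u + w) = a *: phi u + phi w) ->
  (forall u, W u -> enorm (phi u) = enorm u) ->
  (forall y, W (psi y)) -> (forall y, phi (psi y) = y) ->
  (forall u, W u -> psi (phi u) = u) ->
  (forall i j, dotv (psi (delta_mx 0 i)) (psi (delta_mx 0 j)) = (i == j)%:R) /\
  W = [set u | (u <= \matrix_(i < k, j < d) (psi (delta_mx 0 i)) 0 j)%MS].
Proof.
move=> hW hlin hnorm hpsiW hpp hpp'.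
have W0 : W 0 by rewrite hW /= sub0mx.
have WD : forall a u w, W u -> W w -> W (a *: u + w).
  by rewrite hW => a u w /= hu hw; rewrite addmx_sub ?scalemx_sub.
have phi0 : phi 0 = 0.
  have h := hlin 1 0 0 W0 W0; rewrite !scale1r addr0 in h.
  have : phi 0 + phi 0 = phi 0 + 0 by rewrite addr0 -h.
  by move/addrI.
have dpsi : forall y1 y2, dotv (psi y1) (psi y2) = dotv y1 y2.
  move=> y1 y2.
  have W12 : W (psi y1 + psi y2) by rewrite -[psi y1]scale1r; apply: WD.
  have hs : phi (psi y1 + psi y2) = y1 + y2.
    by rewrite -[psi y1]scale1r hlin // scale1r !hpp.
  have n12 := enorm_eq_dot (hnorm _ W12); rewrite hs in n12.
  have n1 := enorm_eq_dot (hnorm _ (hpsiW y1)); rewrite hpp in n1.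
  have n2 := enorm_eq_dot (hnorm _ (hpsiW y2)); rewrite hpp in n2.
  move: n12; rewrite !dotvDl !dotvDr (dotvC y2 y1) (dotvC (psi y2) (psi y1)) n1 n2.
  move=> h; lra.
split; first by move=> i j; rewrite dpsi dot_delta.
set M := \matrix_(i < k, j < d) (psi (delta_mx 0 i)) 0 j.
have hr : forall i, row i M = psi (delta_mx 0 i) by move=> i; apply/rowP => l; rewrite !mxE.
apply/seteqP; split => u /=; last first.
  move=> hu; rewrite hW /=; apply: submx_trans hu _; apply/row_subP => i.
  by rewrite hr; have := hpsiW (delta_mx 0 i); rewrite hW.
move=> Wu; set y := phi u.
have [Wu' hu'] : W (\sum_(i < k) y 0 i *: psi (delta_mx 0 i)) /\
    phi (\sum_(i < k) y 0 i *: psi (delta_mx 0 i)) = \sum_(i < k) y 0 i *: delta_mx 0 i.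
  elim/big_rec2: _ => [|i a b _ [Wa <-]]; first by split.
  by split; [apply: WD|rewrite hlin // hpp].
rewrite -row_sum_delta in hu'.
have -> : u = \sum_(i < k) y 0 i *: psi (delta_mx 0 i) by rewrite -(hpp' _ Wu) -(hpp' _ Wu') hu'.
rewrite (eq_bigr (fun i => y 0 i *: row i M)); last by move=> i _; rewrite hr.
by rewrite -mulmx_sum_row submxMl.
Qed.

End Lin.


Section Meas.
Variable R : realType.
Variables (d0 : measure_display) (X : measurableType d0).
Implicit Types (D : set X).

Lemma trace_meas D (S : set X) : measurable D ->
  (trace_sigma D measurable S <-> (measurable S /\ S `<=` D)).
Proof.
move=> mD; split.
  by move=> [C mC <-]; split; [exact: measurableI|move=> x []].
by move=> [mS SD]; exists S => //; apply/seteqP; split => x; [move=> []|move=> Sx; split => //; exact: SD].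
Qed.

Lemma mb_meas D m n (f : X -> 'M[R]_(m, n)) : measurable D ->
  meas_between D (trace_sigma D measurable) (@measurable _ (MB R m n)) f <->
  measurable_fun D (f : X -> MB R m n).
Proof.
move=> mD; split.
  move=> h _ B mB; have := h B mB; rewrite trace_meas //; by case.
move=> h B mB; rewrite trace_meas //; split; first exact: h.
by move=> x [].
Qed.

Lemma meas_sum D (I : Type) (r : seq I) (F : I -> X -> R) :
  (forall i, measurable_fun D (F i)) -> measurable_fun D (fun x => \sum_(i <- r) F i x).
Proof.
move=> h; elim: r => [|i r IH].
  rewrite (_ : (fun x => _) = (fun x => 0)); first exact: measurable_cst.
  by apply/funext => x; rewrite big_nil.
rewrite (_ : (fun x => _) = (fun x => F i x + \sum_(j <- r) F j x)).
  exact: measurable_funD.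
by apply/funext => x; rewrite big_cons.
Qed.

Definition vmeas D n (f : X -> 'rV[R]_n) := forall l, measurable_fun D (fun x => f x 0 l).

Lemma vmeas_mb D n (f : X -> 'rV[R]_n) : vmeas D f -> measurable_fun D (f : X -> MB R 1 n).
Proof. by move=> h; apply: mx_meas_coord => i j; rewrite (ord1 i). Qed.

Lemma mb_vmeas D n (f : X -> 'rV[R]_n) : measurable_fun D (f : X -> MB R 1 n) -> vmeas D f.
Proof. by move=> h l; exact: (mx_coord_meas h). Qed.

Lemma vmeas_cst D n (c : 'rV[R]_n) : vmeas D (fun _ => c).
Proof. by move=> l; exact: measurable_cst. Qed.

Lemma vmeasD D n (f g : X -> 'rV[R]_n) : vmeas D f -> vmeas D g -> vmeas D (fun x => f x + g x).
Proof.
move=> hf hg l; rewrite (_ : (fun x => _) = (fun x => f x 0 l + g x 0 l)).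
  exact: measurable_funD.
by apply/funext => x; rewrite mxE.
Qed.

Lemma vmeasN D n (f : X -> 'rV[R]_n) : vmeas D f -> vmeas D (fun x => - f x).
Proof.
move=> hf l; rewrite (_ : (fun x => _) = (fun x => - f x 0 l)).
  exact: measurable_funN.
by apply/funext => x; rewrite mxE.
Qed.

Lemma vmeasZ D n (c : X -> R) (f : X -> 'rV[R]_n) : measurable_fun D c -> vmeas D f ->
  vmeas D (fun x => c x *: f x).
Proof.
move=> hc hf l; rewrite (_ : (fun x => _) = (fun x => c x * f x 0 l)).
  exact: measurable_funM.
by apply/funext => x; rewrite mxE.
Qed.

Lemma vmeas_sum D n (I : Type) (r : seq I) (F : I -> X -> 'rV[R]_n) :
  (forall i, vmeas D (F i)) -> vmeas D (fun x => \sum_(i <- r) F i x).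
Proof.
move=> h l; rewrite (_ : (fun x => _) = (fun x => \sum_(i <- r) F i x 0 l)).
  by apply: (@meas_sum D I r (fun i x => F i x 0 l)) => i; exact: h.
by apply/funext => x; rewrite summxE.
Qed.

Lemma meas_dot D n (f g : X -> 'rV[R]_n) : vmeas D f -> vmeas D g ->
  measurable_fun D (fun x => dotv (f x) (g x)).
Proof.
by move=> hf hg; apply: (@meas_sum D _ _ (fun i x => f x 0 i * g x 0 i)) => i; exact: measurable_funM.
Qed.

Lemma vmeas_nrm D n (f : X -> 'rV[R]_n) : vmeas D f -> vmeas D (fun x => nrm (f x)).
Proof.
move=> hf; apply: vmeasZ => //.
apply: (measurableT_comp (@meas_inv R)).
exact: (measurableT_comp (@meas_sqrt R) (meas_dot hf hf)).
Qed.


Lemma vmeas_gs D n (a : nat -> X -> 'rV[R]_n) : (forall m, vmeas D (a m)) ->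
  forall N t, vmeas D (fun x => (gs (a^~ x) N)`_t).
Proof.
move=> ha; elim=> [|N IH] t /=.
  by rewrite (_ : (fun x => _) = (fun _ => 0)); [exact: vmeas_cst|apply/funext => x; rewrite nth_nil].
rewrite (_ : (fun x => _) = (fun x => if (t < N)%N then (gs (a^~ x) N)`_t else
    if t == N then nrm (gsw (gs (a^~ x) N) (a N x)) else 0)); last first.
  by apply/funext => x; rewrite nth_rcons size_gs.
case: (t < N)%N; first exact: IH.
case: (t == N); last exact: vmeas_cst.
apply: vmeas_nrm; rewrite /gsw.
rewrite (_ : (fun x => _) = (fun x => a N x + - \sum_(i < N)
    dotv (a N x) (gs (a^~ x) N)`_i *: (gs (a^~ x) N)`_i)); last first.
  apply/funext => x; congr (_ - _).
  by rewrite (big_nth 0) size_gs big_mkord.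
apply: vmeasD => //; apply: vmeasN; apply: vmeas_sum => i.
by apply: vmeasZ; [apply: meas_dot|].
Qed.

Lemma meas_split D (F : finType) (c : X -> F) (g : F -> X -> R) :
  (forall S, measurable (D `&` [set x | c x = S])) ->
  (forall S, measurable_fun D (g S)) -> measurable_fun D (fun x => g (c x) x).
Proof.
move=> hc hg mD B mB.
have -> : D `&` (fun x => g (c x) x) @^-1` B =
    \big[setU/set0]_(S <- enum F) ((D `&` [set x | c x = S]) `&` (D `&` g S @^-1` B)).
  rewrite -bigcup_seq; apply/seteqP; split => x.
    move=> [Dx Bx]; exists (c x); first by rewrite /= mem_enum.
    by split.
  by move=> [S _ [[Dx <-] [_ Bx]]].
by apply: bigsetU_measurable => S _; apply: measurableI => //; exact: hg.
Qed.

Lemma meas_bigI D (I : choiceType) (r : seq I) (F : I -> set X) :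
  measurable D -> (forall i, measurable (D `&` F i)) ->
  measurable (D `&` [set x | forall i, i \in r -> F i x]).
Proof.
move=> mD h.
have -> : D `&` [set x | forall i, i \in r -> F i x] =
    D `&` \big[setI/setT]_(i <- r) (D `&` F i).
  rewrite -bigcap_seq; apply/seteqP; split => x [Dx hx]; split => //.
    by move=> i ir; split => //; exact: hx.
  by move=> i ir; have [] := hx i ir.
by apply: measurableI => //; apply: bigsetI_measurable => i _.
Qed.

Lemma vmeas_eq0 D n (f : X -> 'rV[R]_n) : measurable D -> vmeas D f ->
  measurable (D `&` [set x | f x = 0]).
Proof.
move=> mD hf.
have -> : D `&` [set x | f x = 0] = D `&` [set x | forall l, l \in enum 'I_n -> f x 0 l = 0].
  apply/seteqP; split => x [Dx hx]; split => //=.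
    by move=> l _; rewrite hx mxE.
  by apply/rowP => l; rewrite mxE; apply: hx; rewrite mem_enum.
apply: meas_bigI => // l.
exact: (hf l mD _ (measurable_set1 (0:R))).
Qed.

Lemma vmeas_nth_map D n (I : Type) (js : seq I) (G : I -> X -> 'rV[R]_n) t :
  (forall j, vmeas D (G j)) -> vmeas D (fun x => nth 0 (map (G^~ x) js) t).
Proof.
move=> h; elim: js t => [|j js IH] t.
  by rewrite (_ : (fun x => _) = (fun _ => 0)); [exact: vmeas_cst|apply/funext => x; rewrite nth_nil].
case: t => [|t] /=; [exact: h|exact: IH].
Qed.


Lemma rowsP_nth d (P : 'M[R]_d) m :
  (rowsP P)`_m = if @insub nat (fun m => (m < d)%N) 'I_d m is Some i then row i P else 0.
Proof.
case: insubP => [i hm <-|hm].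
  rewrite /rowsP (nth_map i) ?size_enum_ord //.
  have -> : nth i (enum 'I_d) (\val i) = i by apply: val_inj; rewrite /= nth_enum_ord.
  by [].
  exact: ltn_ord.
by rewrite nth_default // size_rowsP leqNgt.
Qed.

Lemma vmeas_rowsP D d (Pm : X -> 'M[R]_d) : (forall i j, measurable_fun D (fun x => Pm x i j)) ->
  forall m, vmeas D (fun x => (rowsP (Pm x))`_m).
Proof.
move=> h m; rewrite (_ : (fun x => _) = (fun x =>
   if @insub nat (fun m => (m < d)%N) 'I_d m is Some i then row i (Pm x) else 0)); last first.
  by apply/funext => x; rewrite rowsP_nth.
case: insub => [i|]; last exact: vmeas_cst.
move=> l; rewrite (_ : (fun x => _) = (fun x => Pm x i l)); first exact: h.
by apply/funext => x; rewrite mxE.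
Qed.

Lemma vmeas_gsb D d (Pm : X -> 'M[R]_d) : measurable D ->
  (forall i j, measurable_fun D (fun x => Pm x i j)) ->
  forall t, vmeas D (fun x => (gsb (Pm x))`_t).
Proof.
move=> mD h t.
pose s x := gs (fun m => (rowsP (Pm x))`_m) d.
have hs : forall m, vmeas D (fun x => (s x)`_m).
  by move=> m; apply: (@vmeas_gs D d (fun m x => (rowsP (Pm x))`_m)) => m'; exact: vmeas_rowsP.
pose c x : {ffun 'I_d -> bool} := [ffun j : 'I_d => (s x)`_j != 0].
pose g (S : {ffun 'I_d -> bool}) x := nth 0 (map (fun j : 'I_d => (s x)`_j) [seq j <- enum 'I_d | S j]) t.
have eqg : forall x, (gsb (Pm x))`_t = g (c x) x.
  move=> x; rewrite /g /gsb -/(s x).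
  have hsx : s x = map (fun j : 'I_d => (s x)`_j) (enum 'I_d).
    have -> : map (fun j : 'I_d => (s x)`_j) (enum 'I_d) =
        map (nth 0 (s x)) (map val (enum 'I_d)) by rewrite -map_comp.
    rewrite val_enum_ord -[in LHS](mkseq_nth 0 (s x)).
    by rewrite /s size_gs.
  rewrite {1}hsx filter_map; congr (nth _ (map _ _) _).
  by apply: eq_filter => j; rewrite /c ffunE.
move=> l; rewrite (_ : (fun x => _) = (fun x => g (c x) x 0 l)); last first.
  by apply/funext => x; rewrite eqg.
apply: (@meas_split D _ c (fun S x => g S x 0 l)); last first.
  by move=> S; apply: (@vmeas_nth_map D d 'I_d); exact: hs.
move=> S.
have -> : D `&` [set x | c x = S] =
    D `&` [set x | forall j, j \in enum 'I_d -> ((s x)`_j != 0) = S j].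
  apply/seteqP; split => x [Dx hx]; split => //=.
    by move=> j _; rewrite -hx /c ffunE.
  by apply/ffunP => j; rewrite /c ffunE hx // mem_enum.
apply: meas_bigI => // j.
have m0 := vmeas_eq0 mD (hs j).
case: (S j).
  rewrite (_ : _ `&` _ = D `\` (D `&` [set x | (s x)`_j = 0])); first exact: measurableD.
  apply/seteqP; split => x /=.
    by move=> [Dx /eqP hx]; split => // -[_ /hx].
  by move=> [Dx hx]; split => //; apply/eqP => h0; apply: hx.
rewrite (_ : _ `&` _ = D `&` [set x | (s x)`_j = 0]) //.
by apply/seteqP; split => x [Dx /= hx]; split => //; [apply/eqP; move/negbFE: hx|apply/negbF; rewrite hx].
Qed.

End Meas.


Section Main.
Variable R : realType.
Variables (d0 : measure_display) (X : measurableType d0).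

Lemma Pm_meas k d (V : X -> set 'rV[R]_d) (hV : forall x, Grass R k d (V x)) (X1 : set X) :
  measurable X1 -> meas_between X1 (trace_sigma X1 measurable) (GrBorel R k d) V ->
  forall i j, measurable_fun X1 (fun x => (projT1 (cid (Grass_orthproj (hV x)))) i j).
Proof.
move=> mX1 hmeas; pose Pm x := projT1 (cid (Grass_orthproj (hV x))).
have hPm : forall x, orthproj (Pm x) (V x) by move=> x; exact: (projT2 (cid (Grass_orthproj (hV x)))).
suff hm : measurable_fun X1 (Pm : X -> MB R d d) by exact: (mx_coord_meas hm).
suff H : preimage_set_system X1 Pm (@mxopen R d d) `<=` measurable.
  exact: (@measurability _ _ X (MB R d d) X1 Pm (@mxopen R d d) erefl H).
move=> _ [U oU <-].
pose W := [set W | Grass R k d W /\ exists P, orthproj P W /\ U P].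
have GW : GrBorel R k d W by apply: sub_sigma_algebra; exists U.
have [C mC eC] := hmeas W GW.
have -> : X1 `&` Pm @^-1` U = X1 `&` V @^-1` W.
  apply/seteqP; split => x [X1x hx]; split => //=.
    by split; [exact: hV|exists (Pm x)].
  by move: hx => [_ [P [hP UP]]]; rewrite /= (orthproj_uniq (hPm x) hP).
by rewrite -eC; exact: measurableI.
Qed.


Lemma P1_P2 k d (V : X -> set 'rV[R]_d) (hV : forall x, Grass R k d (V x)) (X1 : set X) :
  measurable X1 -> meas_between X1 (trace_sigma X1 measurable) (GrBorel R k d) V ->
  exists v : 'I_k -> X -> 'rV[R]_d,
    (forall i, meas_between X1 (trace_sigma X1 measurable) (Borel R d) (v i)) /\
    (forall x, X1 x ->
       (forall i j, dotv (v i x) (v j x) = (i == j)%:R) /\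
       V x = [set u | (u <= \matrix_(i < k, j < d) v i x 0 j)%MS]).
Proof.
move=> mX1 hmeas; pose Pm x := projT1 (cid (Grass_orthproj (hV x))).
have hPm : forall x, orthproj (Pm x) (V x) by move=> x; exact: (projT2 (cid (Grass_orthproj (hV x)))).
have mPm := Pm_meas hV mX1 hmeas.
exists (fun i x => (gsb (Pm x))`_i); split.
  move=> i; apply/(mb_meas _ mX1); apply: vmeas_mb.
  exact: (vmeas_gsb mX1 mPm).
move=> x _; have [_ [h1 h2]] := gsb_main (hV x) (hPm x).
by split.
Qed.


Lemma P2_P1 k d (V : X -> set 'rV[R]_d) (hV : forall x, Grass R k d (V x)) (X2 : set X)
  (v : 'I_k -> X -> 'rV[R]_d) :
  measurable X2 ->
  (forall i, meas_between X2 (trace_sigma X2 measurable) (Borel R d) (v i)) ->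
  (forall x, X2 x ->
       (forall i j, dotv (v i x) (v j x) = (i == j)%:R) /\
       V x = [set u | (u <= \matrix_(i < k, j < d) v i x 0 j)%MS]) ->
  meas_between X2 (trace_sigma X2 measurable) (GrBorel R k d) V.
Proof.
move=> mX2 hv hpt.
pose Mv x := \matrix_(i < k, j < d) v i x 0 j.
pose Pm x := (Mv x)^T *m Mv x.
have hPm : forall x, X2 x -> orthproj (Pm x) (V x).
  move=> x X2x; have [h1 h2] := hpt x X2x; rewrite h2.
  by apply: ON_orthproj; exact: (ON_vec h1).
have mv : forall i l, measurable_fun X2 (fun x => v i x 0 l).
  by move=> i l; apply: (mb_vmeas (f := v i)); apply/(mb_meas _ mX2); exact: hv.
have mPm : measurable_fun X2 (Pm : X -> MB R d d).
  apply: mx_meas_coord => a b.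
  rewrite (_ : (fun x => _) = (fun x => \sum_(i <- index_enum 'I_k) v i x 0 a * v i x 0 b)).
    by apply: meas_sum => i; apply: measurable_funM.
  by apply/funext => x; rewrite /Pm mxE; apply: eq_bigr => i _; rewrite !mxE.
move=> B GB; apply/trace_meas => //; split; last by move=> x [].
pose Fam := [set B | measurable (X2 `&` V @^-1` B)].
suff : GrBorel R k d `<=` Fam by move/(_ B GB).
apply: smallest_sub; last first.
  move=> _ [U [oU ->]]; rewrite /Fam /=.
  have -> : X2 `&` V @^-1` [set W | Grass R k d W /\ exists P, orthproj P W /\ U P] =
      X2 `&` Pm @^-1` U.
    apply/seteqP; split => x [X2x hx]; split => //=.
      by move: hx => [_ [P [hP UP]]]; rewrite (orthproj_uniq (hPm x X2x) hP).
    by split; [exact: hV|exists (Pm x); split => //; exact: hPm].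
  by apply: mPm => //; apply: sub_sigma_algebra.
split.
- by rewrite /Fam /= preimage_set0 setI0.
- move=> A FA; rewrite /Fam /=.
  have -> : X2 `&` V @^-1` (Grass R k d `\` A) = X2 `\` (X2 `&` V @^-1` A).
    apply/seteqP; split => x /=.
      by move=> [X2x [_ nA]]; split => // -[].
    by move=> [X2x h]; split => //; split; [exact: hV|move=> Ax; apply: h].
  exact: measurableD.
- move=> F hF; rewrite /Fam /= preimage_bigcup setI_bigcupr.
  exact: bigcupT_measurable.
Qed.

End Main.


Section Prod.
Variable R : realType.
Variables (d0 : measure_display) (X : measurableType d0).

Definition rect n : set (set (X * 'rV[R]_n)) :=
  [set C | exists A B, measurable A /\ Borel R n B /\ C = A `*` B].
Arguments rect : clear implicits.
Definition TP n := g_sigma_algebraType (rect n).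
Arguments TP : clear implicits.


Lemma rect_meas n (A : set X) (B : set 'rV[R]_n) : measurable A -> Borel R n B ->
  measurable (A `*` B : set (TP n)).
Proof. by move=> mA mB; apply: sub_sigma_algebra; exists A, B. Qed.

Lemma BorelT n : Borel R n setT.
Proof. exact: (@measurableT _ (MB R 1 n)). Qed.

Lemma fst_lift n (X2 : set X) (g : X -> R) : measurable X2 -> measurable_fun X2 g ->
  measurable_fun (X2 `*` setT : set (TP n)) (fun p => g p.1).
Proof.
move=> mX2 mg _ B mB.
have -> : (X2 `*` setT) `&` (fun p : TP n => g p.1) @^-1` B = (X2 `&` g @^-1` B) `*` setT.
  by apply/seteqP; split => -[x u] /= [[]].
apply: rect_meas; last exact: BorelT.
exact: mg.
Qed.

Lemma snd_coord n l : measurable_fun [set: TP n] (fun p : TP n => p.2 0 l).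
Proof.
move=> _ B mB; rewrite setTI.
have -> : (fun p : TP n => p.2 0 l) @^-1` B = setT `*` ((fun u : 'rV[R]_n => u 0 l) @^-1` B).
  by apply/seteqP; split => -[x u] /=; [move=> h; split|move=> [_ h]].
apply: rect_meas => //.
have := @entry_meas R 1 n 0 l measurableT B mB; rewrite setTI; exact.
Qed.

Lemma into_TP n m (D : set (TP n)) (h : TP n -> TP m) :
  measurable_fun D (fun p => (h p).1) -> measurable_fun D (fun p => ((h p).2 : MB R 1 m)) ->
  measurable_fun D h.
Proof.
move=> h1 h2 mD.
suff H : preimage_set_system D h (rect m) `<=` measurable.
  exact: (@measurability _ _ (TP n) (TP m) D h (rect m) erefl H mD).
move=> _ [_ [A [B [mA [mB ->]]]] <-].
have -> : D `&` h @^-1` (A `*` B) = (D `&` (fun p => (h p).1) @^-1` A) `&`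
    (D `&` (fun p => ((h p).2 : MB R 1 m)) @^-1` B).
  by apply/seteqP; split => p /=; [move=> [Dp [hA hB]]|move=> [[Dp hA] [_ hB]]].
by apply: measurableI; [exact: h1|exact: h2].
Qed.

Lemma trace_transfer n m (D : set (TP n)) (E : set (X * 'rV[R]_n)) (F : set (X * 'rV[R]_m))
    (h : TP n -> TP m) :
  measurable D -> E `<=` D -> measurable_fun D h -> (forall p, E p -> F (h p)) ->
  meas_between E (trace_sigma E (prod_sigma R d0 X n)) (trace_sigma F (prod_sigma R d0 X m)) h.
Proof.
move=> mD ED mh hEF _ [C mC <-].
exists (D `&` h @^-1` C); first exact: mh.
apply/seteqP; split => p /=.
  by move=> [Ep [Dp Cp]]; split => //; split => //; exact: hEF.
by move=> [Ep [Fp Cp]]; split => //; split => //; exact: ED.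
Qed.

Lemma section_meas m (y0 : 'rV[R]_m) : measurable_fun [set: X] (fun x => ((x, y0) : TP m)).
Proof.
move=> _ C mC; rewrite setTI.
suff H : preimage_set_system setT (fun x => ((x, y0) : TP m)) (rect m) `<=` measurable.
  by have := (@measurability _ _ X (TP m) setT (fun x => ((x, y0) : TP m)) (rect m) erefl H
    measurableT C mC); rewrite setTI.
move=> _ [_ [A [B [mA [mB ->]]]] <-]; rewrite setTI.
have [By|By] := pselect (B y0).
  rewrite (_ : _ @^-1` _ = A) //.
  by apply/seteqP; split => x /=; [move=> []|move=> Ax; split].
rewrite (_ : _ @^-1` _ = set0) //.
by apply/seteqP; split => x //= [].
Qed.


Lemma fst_meas n (X2 : set X) : measurable X2 ->
  measurable_fun (X2 `*` setT : set (TP n)) (fun p : TP n => p.1).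
Proof.
move=> mX2 _ A mA.
have -> : (X2 `*` setT) `&` (fun p : TP n => p.1) @^-1` A = (X2 `&` A) `*` setT.
  by apply/seteqP; split => -[x u] /= [[]].
by apply: rect_meas; [exact: measurableI|exact: BorelT].
Qed.

Lemma P2_P3 k d (V : X -> set 'rV[R]_d) (X2 : set X) (v : 'I_k -> X -> 'rV[R]_d) :
  measurable X2 ->
  (forall i, meas_between X2 (trace_sigma X2 measurable) (Borel R d) (v i)) ->
  (forall x, X2 x ->
       (forall i j, dotv (v i x) (v j x) = (i == j)%:R) /\
       V x = [set u | (u <= \matrix_(i < k, j < d) v i x 0 j)%MS]) ->
      let E := [set p : X * 'rV[R]_d | X2 p.1 /\ V p.1 p.2] in
      let F := X2 `*` [set: 'rV[R]_k] in
      exists (L : X * 'rV[R]_d -> X * 'rV[R]_k) (L' : X * 'rV[R]_k -> X * 'rV[R]_d),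
        (forall p, E p -> F (L p)) /\ (forall q, F q -> E (L' q)) /\
        (forall p, E p -> L' (L p) = p) /\ (forall q, F q -> L (L' q) = q) /\
        meas_between E (trace_sigma E (prod_sigma R d0 X d))
                       (trace_sigma F (prod_sigma R d0 X k)) L /\
        meas_between F (trace_sigma F (prod_sigma R d0 X k))
                       (trace_sigma E (prod_sigma R d0 X d)) L' /\
        (forall p, E p -> (L p).1 = p.1) /\
        (forall x, X2 x ->
           (forall (a : R) u w, V x u -> V x w ->
              (L (x, a *: u + w)).2 = a *: (L (x, u)).2 + (L (x, w)).2) /\
           (forall u, V x u -> enorm (L (x, u)).2 = enorm u) /\
           (forall y, exists u, V x u /\ (L (x, u)).2 = y)).
Proof.
move=> mX2 hv hpt E F.
pose Mv x := \matrix_(i < k, j < d) v i x 0 j.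
have hON : forall x, X2 x -> Mv x *m (Mv x)^T = 1%:M.
  by move=> x X2x; have [h1 _] := hpt x X2x; exact: (ON_vec h1).
have hVx : forall x, X2 x -> V x = [set u | (u <= Mv x)%MS].
  by move=> x X2x; have [_ h2] := hpt x X2x.
have mv : forall i l, measurable_fun X2 (fun x => v i x 0 l).
  by move=> i l; apply: (mb_vmeas (f := v i)); apply/(mb_meas _ mX2); exact: hv.
exists (fun p => (p.1, p.2 *m (Mv p.1)^T)), (fun q => (q.1, q.2 *m Mv q.1)).
split; first by move=> [x u] [/= X2x _]; split.
split.
  move=> [x y] [/= X2x _]; split => //=; rewrite hVx //; exact: submxMl.
split.
  move=> [x u] [/= X2x Vu]; congr pair; apply: ON_back; first exact: hON.
  by move: Vu; rewrite hVx.
split.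
  by move=> [x y] [/= X2x _]; congr pair; apply: ON_fwd; exact: hON.
have mD : forall n, measurable (X2 `*` setT : set (TP n)).
  by move=> n; apply: rect_meas => //; exact: BorelT.
split.
  apply: (trace_transfer (D := X2 `*` setT)) => //.
  - by move=> [x u] [].
  - apply: into_TP; first exact: fst_meas.
    apply: mx_meas_coord => i0 i.
    rewrite (_ : (fun p => _) = (fun p : TP d => \sum_(l <- index_enum 'I_d) p.2 0 l * v i p.1 0 l)).
      apply: meas_sum => l; apply: measurable_funM.
        by apply: measurable_funTS; exact: snd_coord.
      exact: (fst_lift (g := fun x => v i x 0 l) mX2 (mv i l)).
    by apply/funext => -[x u] /=; rewrite mxE (ord1 i0); apply: eq_bigr => l _; rewrite !mxE.
  - by move=> [x u] [/= X2x _]; split.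
split.
  apply: (trace_transfer (D := X2 `*` setT)) => //.
  - apply: into_TP; first exact: fst_meas.
    apply: mx_meas_coord => i0 l.
    rewrite (_ : (fun p => _) = (fun p : TP k => \sum_(i <- index_enum 'I_k) p.2 0 i * v i p.1 0 l)).
      apply: meas_sum => i; apply: measurable_funM.
        by apply: measurable_funTS; exact: snd_coord.
      exact: (fst_lift (g := fun x => v i x 0 l) mX2 (mv i l)).
    by apply/funext => -[x y] /=; rewrite mxE (ord1 i0); apply: eq_bigr => i _; rewrite !mxE.
  - move=> [x y] [/= X2x _]; split => //=; rewrite hVx //; exact: submxMl.
split; first by [].
move=> x X2x; split.
  by move=> a u w _ _ /=; rewrite mulmxDl scalemxAl.
split.
  move=> u Vu /=; rewrite /enorm ON_dot //; first exact: hON.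
  by move: Vu; rewrite hVx.
move=> y; exists (y *m Mv x); split; first by rewrite hVx //; exact: submxMl.
by rewrite /= ON_fwd //; exact: hON.
Qed.


Lemma P3_P2 k d (V : X -> set 'rV[R]_d) (hV : forall x, Grass R k d (V x)) (X3 : set X)
  (E : set (X * 'rV[R]_d)) (F : set (X * 'rV[R]_k))
  (L : X * 'rV[R]_d -> X * 'rV[R]_k) (L' : X * 'rV[R]_k -> X * 'rV[R]_d) :
  measurable X3 ->
  E = [set p : X * 'rV[R]_d | X3 p.1 /\ V p.1 p.2] ->
  F = X3 `*` [set: 'rV[R]_k] ->
  (forall q, F q -> E (L' q)) ->
  (forall p, E p -> L' (L p) = p) -> (forall q, F q -> L (L' q) = q) ->
  meas_between F (trace_sigma F (prod_sigma R d0 X k))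
                 (trace_sigma E (prod_sigma R d0 X d)) L' ->
  (forall p, E p -> (L p).1 = p.1) ->
  (forall x, X3 x ->
     (forall (a : R) u w, V x u -> V x w ->
        (L (x, a *: u + w)).2 = a *: (L (x, u)).2 + (L (x, w)).2) /\
     (forall u, V x u -> enorm (L (x, u)).2 = enorm u)) ->
  exists v : 'I_k -> X -> 'rV[R]_d,
    (forall i, meas_between X3 (trace_sigma X3 measurable) (Borel R d) (v i)) /\
    (forall x, X3 x ->
       (forall i j, dotv (v i x) (v j x) = (i == j)%:R) /\
       V x = [set u | (u <= \matrix_(i < k, j < d) v i x 0 j)%MS]).
Proof.
move=> mX3 hE hF hFE hLL hLL' hmL' hL1 hfib.
exists (fun i x => (L' (x, delta_mx 0 i)).2); split.
  move=> i B mB; apply/trace_meas => //; split; last by move=> x [].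
  pose S := E `&` (setT `*` B).
  have hS : trace_sigma E (prod_sigma R d0 X d) S.
    by exists (setT `*` B) => //; apply: (rect_meas (n := d)) => //; exact: measurableT.
  have [C0 mC0 eC0] := hmL' S hS.
  have -> : X3 `&` (fun x => (L' (x, delta_mx 0 i)).2) @^-1` B =
      X3 `&` (fun x => ((x, delta_mx 0 i) : TP k)) @^-1` C0.
    have hFx : forall x, X3 x -> F (x, delta_mx 0 i) by move=> x X3x; rewrite hF.
    apply/seteqP; split => x [X3x hx]; split => //=.
      have : (F `&` L' @^-1` S) (x, delta_mx 0 i).
        split; first exact: hFx.
        rewrite /preimage /S /=; split; first by apply: hFE; exact: hFx.
        by split.
      by rewrite -eC0 => -[].
    have : (F `&` C0) (x, delta_mx 0 i) by split; [exact: hFx|].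
    by rewrite eC0 => -[_ [_ [_ ?]]].
  apply: measurableI => //.
  by have := section_meas (delta_mx 0 i : 'rV[R]_k) measurableT mC0; rewrite setTI.
move=> x X3x.
have [A [_ hVA]] := hV x.
have [hlin hnorm] := hfib x X3x.
have hq : forall y, L' (x, y) = (x, (L' (x, y)).2).
  move=> y; have Fxy : F (x, y) by rewrite hF.
  have E' := hFE _ Fxy.
  have h1 := hL1 _ E'; rewrite hLL' // in h1.
  by rewrite [LHS]surjective_pairing -h1.
have hp : forall u, V x u -> L (x, u) = (x, (L (x, u)).2).
  move=> u Vu; have Exu : E (x, u) by rewrite hE.
  by rewrite [LHS]surjective_pairing hL1.
apply: (@iso_basis R d k _ A (V x) (fun u => (L (x, u)).2) (fun y => (L' (x, y)).2)) => //.
- move=> y; have Fxy : F (x, y) by rewrite hF.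
  have := hFE _ Fxy; rewrite hE hq; by move=> [].
- move=> y; have Fxy : F (x, y) by rewrite hF.
  by rewrite -hq hLL'.
- move=> u Vu; have Exu : E (x, u) by rewrite hE.
  by rewrite -hp // hLL.
Qed.

End Prod.

Unset Implicit Arguments. Set Strict Implicit. Set Printing Implicit Defensive.

Theorem theoremA8 (R : realType) (d0 : measure_display) (X : measurableType d0)
  (mu : {measure set X -> \bar R}) (hfin : (mu setT < +oo)%E)
  (k d : nat) (hkd : (k <= d)%N)
  (V : X -> set 'rV[R]_d) (hV : forall x, Grass R k d (V x)) :
  let P1 :=
    exists X1 : set X, measurable X1 /\ mu (~` X1) = 0%E /\
      meas_between X1 (trace_sigma X1 measurable) (GrBorel R k d) V in
  let P2 :=
    exists X2 : set X, measurable X2 /\ mu (~` X2) = 0%E /\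
      exists v : 'I_k -> X -> 'rV[R]_d,
        (forall i, meas_between X2 (trace_sigma X2 measurable) (Borel R d) (v i)) /\
        (forall x, X2 x ->
           (forall i j, dotv (v i x) (v j x) = (i == j)%:R) /\
           V x = [set u | (u <= \matrix_(i < k, j < d) v i x 0 j)%MS]) in
  let P3 :=
    exists X3 : set X, measurable X3 /\ mu (~` X3) = 0%E /\
      let E := [set p : X * 'rV[R]_d | X3 p.1 /\ V p.1 p.2] in
      let F := X3 `*` [set: 'rV[R]_k] in
      exists (L : X * 'rV[R]_d -> X * 'rV[R]_k) (L' : X * 'rV[R]_k -> X * 'rV[R]_d),
        (forall p, E p -> F (L p)) /\ (forall q, F q -> E (L' q)) /\
        (forall p, E p -> L' (L p) = p) /\ (forall q, F q -> L (L' q) = q) /\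
        meas_between E (trace_sigma E (prod_sigma R d0 X d))
                       (trace_sigma F (prod_sigma R d0 X k)) L /\
        meas_between F (trace_sigma F (prod_sigma R d0 X k))
                       (trace_sigma E (prod_sigma R d0 X d)) L' /\
        (forall p, E p -> (L p).1 = p.1) /\
        (forall x, X3 x ->
           (forall (a : R) u w, V x u -> V x w ->
              (L (x, a *: u + w)).2 = a *: (L (x, u)).2 + (L (x, w)).2) /\
           (forall u, V x u -> enorm (L (x, u)).2 = enorm u) /\
           (forall y, exists u, V x u /\ (L (x, u)).2 = y)) in
  (P1 <-> P2) /\ (P2 <-> P3).
Proof.
move=> P1 P2 P3; split; split.
- move=> [X1 [mX1 [mu1 hm]]]; exists X1; split => //; split => //.
  exact: (P1_P2 hV mX1 hm).
- move=> [X2 [mX2 [mu2 [v [hv hpt]]]]]; exists X2; split => //; split => //.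
  exact: (P2_P1 hV mX2 hv hpt).
- move=> [X2 [mX2 [mu2 [v [hv hpt]]]]]; exists X2; split => //; split => //.
  exact: (P2_P3 mX2 hv hpt).
- move=> [X3 [mX3 [mu3 H]]]; move: H => [L [L' [h1 [h2 [h3 [h4 [h5 [h6 [h7 h8]]]]]]]]].
  exists X3; split => //; split => //.
  apply: (P3_P2 hV mX3 erefl erefl h2 h3 h4 h6 h7) => x X3x.
  by have [a [b _]] := h8 x X3x; split.
Qed.
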